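(* Let $\zeta:Q_0\to Q_1$ be a homomorphism between injective right $R$-modules and $T=\operatorname{Ker}(\zeta)$. (1) If $T$ is partial cosilting (with respect to some injective copresentation), then $({}^{\circ}T,\operatorname{Cogen}(T))$ is a torsion pair in $\mathrm{Mod}\text{-}R$. (2) $T$ is cosilting with respect to $\zeta$ if and only if $({}^{\circ}T,\mathcal{B}_\zeta)$ is a torsion pair. (3) If $T$ is cosilting, then $\operatorname{Cogen}(T)=\operatorname{Copres}(T)$.
   Context: All modules are right modules over a unital associative ring $R$. For $\zeta:Q_0\to Q_1$, $\mathcal{B}_\zeta=\{X \mid \operatorname{Hom}_R(X,\zeta) \text{ is an epimorphism}\}$. ${}^{\circ}T=\{X\mid\operatorname{Hom}_R(X,T)=0\}$; $\operatorname{Cogen}(T)$ is the class of modules embeddable in a direct product of copies of $T$; $\operatorname{Copres}(T)$ is the class of modules isomorphic to kernels of homomorphisms between direct products of copies of $T$. An injective copresentation of $T$ is an exact sequence $0\to T\to Q_0\xrightarrow{\zeta}Q_1$ with $Q_0,Q_1$ injective. $T$ is partial cosilting with respect to $\zeta$ if $0\to T\to Q_0\xrightarrow{\zeta}Q_1$ is an injective copresentation, $T\in\mathcal{B}_\zeta$, and $\mathcal{B}_\zeta$ is closed under direct products; $T$ is cosilting with respect to $\zeta$ if $0\to T\to Q_0\xrightarrow{\zeta}Q_1$ is an injective copresentation and $\operatorname{Cogen}(T)=\mathcal{B}_\zeta$; $T$ is (partial) cosilting if it is so with respect to some injective copresentation. *)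

(* Defs.v *)
(* Right R-modules are modelled as left modules over the
   converse ring R^c, i.e. as [lmodType R^c]; homomorphisms of right
   R-modules are the [{linear M -> N}] maps. *)
From HB Require Import structures.
From mathcomp Require Import all_boot all_order all_algebra.
From Stdlib Require Import ClassicalDescription ClassicalEpsilon FunctionalExtensionality.
Set Implicit Arguments. Unset Strict Implicit. Unset Printing Implicit Defensive.
Import GRing.Theory.
Local Open Scope ring_scope.

(* ---------- classical eqType / choiceType structures (needed to put an
   lmodType structure on arbitrary direct products) ---------- *)
Definition cdec_eq (T : Type) (x y : T) : bool :=
  if excluded_middle_informative (x = y) then true else false.

Lemma cdec_eqP (T : Type) : Equality.axiom (@cdec_eq T).
Proof.
move=> x y; rewrite /cdec_eq; case: excluded_middle_informative => h.
  by constructor. by constructor.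
Qed.

Definition cfind (T : Type) (P : pred T) (n : nat) : option T :=
  match excluded_middle_informative (exists x, P x) with
  | left h => Some (proj1_sig (constructive_indefinite_description _ h))
  | right _ => None
  end.

Lemma cfind_correct (T : Type) (P : pred T) n x : cfind P n = Some x -> P x.
Proof.
rewrite /cfind; case: excluded_middle_informative => // h [<-].
exact: proj2_sig (constructive_indefinite_description _ h).
Qed.

Lemma cfind_complete (T : Type) (P : pred T) :
  (exists x, P x) -> exists n, cfind P n.
Proof.
by move=> h; exists 0%N; rewrite /cfind; case: excluded_middle_informative.
Qed.

Lemma cfind_ext (T : Type) (P Q : pred T) : P =1 Q -> cfind P =1 cfind Q.
Proof.
by move=> /functional_extensionality PQ n; rewrite PQ.
Qed.

Section DProd.
Variables (R : pzRingType) (I : Type) (M : I -> lmodType R).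

Definition dprod : Type := forall i, M i.

HB.instance Definition _ := hasDecEq.Build dprod (@cdec_eqP dprod).
HB.instance Definition _ :=
  hasChoice.Build dprod (@cfind_correct dprod) (@cfind_complete dprod)
    (@cfind_ext dprod).

Definition dp_zero : dprod := fun i => 0.
Definition dp_opp (x : dprod) : dprod := fun i => - x i.
Definition dp_add (x y : dprod) : dprod := fun i => x i + y i.
Definition dp_scale (a : R) (x : dprod) : dprod := fun i => a *: x i.

Lemma dp_addA : associative dp_add.
Proof. by move=> x y z; apply: functional_extensionality_dep => i; exact: addrA. Qed.
Lemma dp_addC : commutative dp_add.
Proof. by move=> x y; apply: functional_extensionality_dep => i; exact: addrC. Qed.
Lemma dp_add0 : left_id dp_zero dp_add.
Proof. by move=> x; apply: functional_extensionality_dep => i; exact: add0r. Qed.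
Lemma dp_addN : left_inverse dp_zero dp_opp dp_add.
Proof. by move=> x; apply: functional_extensionality_dep => i; exact: addNr. Qed.

HB.instance Definition _ := GRing.isZmodule.Build dprod dp_addA dp_addC dp_add0 dp_addN.

Lemma dp_scaleA a b v : dp_scale a (dp_scale b v) = dp_scale (a * b) v.
Proof. by apply: functional_extensionality_dep => i; exact: scalerA. Qed.
Lemma dp_scale1 : left_id 1 dp_scale.
Proof. by move=> x; apply: functional_extensionality_dep => i; exact: scale1r. Qed.
Lemma dp_scaleDr : right_distributive dp_scale +%R.
Proof. by move=> a x y; apply: functional_extensionality_dep => i; exact: scalerDr. Qed.
Lemma dp_scaleDl v : {morph dp_scale^~ v : a b / a + b}.
Proof. by move=> a b; apply: functional_extensionality_dep => i; exact: scalerDl. Qed.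

HB.instance Definition _ :=
  GRing.Zmodule_isLmodule.Build R dprod dp_scaleA dp_scale1 dp_scaleDr dp_scaleDl.

Definition dp_proj (i : I) (x : dprod) : M i := x i.
End DProd.

Section Modules.
Variable R : nzRingType.
Local Notation Mod := (lmodType R^c).

Definition power (I : Type) (T : Mod) : Mod := dprod (fun _ : I => T).

Definition mclass := Mod -> Prop.

Definition hom_zero (X Y : Mod) : Prop :=
  forall f : {linear X -> Y}, forall x, f x = 0.

Definition injective_module (Q : Mod) : Prop :=
  forall (A B : Mod) (f : {linear A -> B}) (g : {linear A -> Q}),
    injective f -> exists h : {linear B -> Q}, forall a, h (f a) = g a.

Definition exact_copres (T Q0 Q1 : Mod) (iota : {linear T -> Q0})
    (zeta : {linear Q0 -> Q1}) : Prop :=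
  injective iota /\ (forall q, zeta q = 0 <-> exists t, iota t = q).

Definition inj_copres (T Q0 Q1 : Mod) (zeta : {linear Q0 -> Q1}) : Prop :=
  [/\ injective_module Q0, injective_module Q1 &
      exists iota : {linear T -> Q0}, exact_copres iota zeta].

(* B_zeta = { X | Hom_R(X, zeta) is an epimorphism } *)
Definition B_class (Q0 Q1 : Mod) (zeta : {linear Q0 -> Q1}) : mclass :=
  fun X => forall g : {linear X -> Q1},
    exists h : {linear X -> Q0}, forall x, zeta (h x) = g x.

Definition perpL (T : Mod) : mclass := fun X => hom_zero X T.

Definition Cogen (T : Mod) : mclass := fun X =>
  exists (I : Type) (f : {linear X -> power I T}), injective f.

Definition Copres (T : Mod) : mclass := fun X =>
  exists (I J : Type) (g : {linear power I T -> power J T})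
         (f : {linear X -> power I T}),
    injective f /\ (forall y, g y = 0 <-> exists x, f x = y).

Definition closed_under_products (C : mclass) : Prop :=
  forall (I : Type) (M : I -> Mod), (forall i, C (M i)) -> C (dprod M).

Definition torsion_pair (Tc Fc : mclass) : Prop :=
  (forall X, Tc X <-> (forall Y, Fc Y -> hom_zero X Y)) /\
  (forall Y, Fc Y <-> (forall X, Tc X -> hom_zero X Y)).

Definition partial_cosilting_wrt (T Q0 Q1 : Mod) (zeta : {linear Q0 -> Q1}) : Prop :=
  [/\ inj_copres T zeta, B_class zeta T & closed_under_products (B_class zeta)].

Definition cosilting_wrt (T Q0 Q1 : Mod) (zeta : {linear Q0 -> Q1}) : Prop :=
  inj_copres T zeta /\ (forall X, Cogen T X <-> B_class zeta X).

Definition partial_cosilting (T : Mod) : Prop :=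
  exists (Q0 Q1 : Mod) (zeta : {linear Q0 -> Q1}), partial_cosilting_wrt T zeta.

Definition cosilting (T : Mod) : Prop :=
  exists (Q0 Q1 : Mod) (zeta : {linear Q0 -> Q1}), cosilting_wrt T zeta.
End Modules.

(* Main.v *)
Require Import Defs.
From HB Require Import structures.
From mathcomp Require Import all_boot all_order all_algebra.
From Stdlib Require Import ClassicalDescription ClassicalEpsilon FunctionalExtensionality ProofIrrelevance PropExtensionality.
Set Implicit Arguments. Unset Strict Implicit. Unset Printing Implicit Defensive.
Import GRing.Theory.
Local Open Scope ring_scope.
Definition mkLin (S : pzRingType) (U V : lmodType S) (f : U -> V)
  (H : linear f) : {linear U -> V} := HB.pack f (GRing.isLinear.Build _ _ _ _ f H).

Lemma mkLinE (S : pzRingType) (U V : lmodType S) (f : U -> V) (H : linear f) x :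
  mkLin H x = f x.
Proof. by []. Qed.

Section Sub.
Variables (S : pzRingType) (M : lmodType S) (P : M -> Prop).
Hypothesis P0 : P 0.
Hypothesis PD : forall a x y, P x -> P y -> P (a *: x + y).

Definition subT : Type := (fun (_ : P 0) (_ : forall a x y, P x -> P y -> P (a *: x + y)) => {x : M | P x}) P0 PD.
HB.instance Definition _ := hasDecEq.Build subT (@cdec_eqP subT).
HB.instance Definition _ :=
  hasChoice.Build subT (@cfind_correct subT) (@cfind_complete subT)
    (@cfind_ext subT).

Lemma subT_eq (u v : subT) : proj1_sig u = proj1_sig v -> u = v.
Proof. case: u => x px; case: v => y py /= exy; subst y; f_equal; exact: proof_irrelevance. Qed.

Lemma PN x : P x -> P (- x).
Proof. by move=> px; have := PD (-1) px P0; rewrite addr0 scaleN1r. Qed.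
Lemma PA x y : P x -> P y -> P (x + y).
Proof. by move=> px py; have := PD 1 px py; rewrite scale1r. Qed.
Lemma PZ a x : P x -> P (a *: x).
Proof. by move=> px; have := PD a px P0; rewrite addr0. Qed.

Definition s_zero : subT := exist _ 0 P0.
Definition s_opp (u : subT) : subT := exist _ (- proj1_sig u) (PN (proj2_sig u)).
Definition s_add (u v : subT) : subT :=
  exist _ (proj1_sig u + proj1_sig v) (PA (proj2_sig u) (proj2_sig v)).
Definition s_scale a (u : subT) : subT := exist _ (a *: proj1_sig u) (PZ a (proj2_sig u)).

Lemma s_addA : associative s_add.
Proof. by move=> x y z; apply: subT_eq; exact: addrA. Qed.
Lemma s_addC : commutative s_add.
Proof. by move=> x y; apply: subT_eq; exact: addrC. Qed.
Lemma s_add0 : left_id s_zero s_add.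
Proof. by move=> x; apply: subT_eq; exact: add0r. Qed.
Lemma s_addN : left_inverse s_zero s_opp s_add.
Proof. by move=> x; apply: subT_eq; exact: addNr. Qed.
HB.instance Definition _ := GRing.isZmodule.Build subT s_addA s_addC s_add0 s_addN.
Lemma s_scaleA a b v : s_scale a (s_scale b v) = s_scale (a * b) v.
Proof. by apply: subT_eq; exact: scalerA. Qed.
Lemma s_scale1 : left_id 1 s_scale.
Proof. by move=> x; apply: subT_eq; exact: scale1r. Qed.
Lemma s_scaleDr : right_distributive s_scale +%R.
Proof. by move=> a x y; apply: subT_eq; exact: scalerDr. Qed.
Lemma s_scaleDl v : {morph s_scale^~ v : a b / a + b}.
Proof. by move=> a b; apply: subT_eq; exact: scalerDl. Qed.
HB.instance Definition _ :=
  GRing.Zmodule_isLmodule.Build S subT s_scaleA s_scale1 s_scaleDr s_scaleDl.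

Lemma s_incl_lin : linear (fun u : subT => proj1_sig u).
Proof. by []. Qed.
Definition s_incl : {linear subT -> M} := mkLin s_incl_lin.
Lemma s_incl_inj : injective s_incl.
Proof. by move=> u v; apply: subT_eq. Qed.
Lemma s_incl_P u : P (s_incl u).
Proof. exact: proj2_sig u. Qed.

Section Corestr.
Variables (A : lmodType S) (f : {linear A -> M}) (Hf : forall a, P (f a)).
Definition s_cores_fun (a : A) : subT := exist _ (f a) (Hf a).
Lemma s_cores_lin : linear s_cores_fun.
Proof. by move=> a x y; apply: subT_eq => /=; rewrite linearP. Qed.
Definition s_cores : {linear A -> subT} := mkLin s_cores_lin.
Lemma s_coresE a : s_incl (s_cores a) = f a.
Proof. by []. Qed.
End Corestr.
End Sub.

Section Quot.
Variables (S : pzRingType) (M : lmodType S) (N : M -> Prop).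
Hypothesis N0 : N 0.
Hypothesis ND : forall a x y, N x -> N y -> N (a *: x + y).

Definition cls (m : M) : M -> Prop := fun z => N (z - m).
Definition quotT : Type := (fun (_ : N 0) (_ : forall a x y, N x -> N y -> N (a *: x + y)) => {A : M -> Prop | exists m, A = cls m}) N0 ND.
HB.instance Definition _ := hasDecEq.Build quotT (@cdec_eqP quotT).
HB.instance Definition _ :=
  hasChoice.Build quotT (@cfind_correct quotT) (@cfind_complete quotT)
    (@cfind_ext quotT).

Lemma quotT_eq (u v : quotT) : proj1_sig u = proj1_sig v -> u = v.
Proof. case: u => x px; case: v => y py /= exy; subst y; f_equal; exact: proof_irrelevance. Qed.

Definition qpi (m : M) : quotT := exist _ (cls m) (ex_intro _ m erefl).
Definition qrep (A : quotT) : M :=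
  proj1_sig (constructive_indefinite_description _ (proj2_sig A)).
Lemma qpi_rep A : qpi (qrep A) = A.
Proof.
apply: quotT_eq; rewrite /qrep /=.
by case: (constructive_indefinite_description _ _) => m /= ->.
Qed.

Lemma NN x : N x -> N (- x).
Proof. by move=> px; have := ND (-1) px N0; rewrite addr0 scaleN1r. Qed.
Lemma NA x y : N x -> N y -> N (x + y).
Proof. by move=> px py; have := ND 1 px py; rewrite scale1r. Qed.
Lemma NZ a x : N x -> N (a *: x).
Proof. by move=> px; have := ND a px N0; rewrite addr0. Qed.

Lemma qpi_eq x y : qpi x = qpi y <-> N (x - y).
Proof.
split.
  move=> /(f_equal (@proj1_sig _ _)) /= e.
  have : cls y y by rewrite /cls subrr.
  by rewrite -e /cls => /NN; rewrite opprB.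
move=> nxy; apply: quotT_eq => /=; apply: functional_extensionality => z.
apply: propositional_extensionality; rewrite /cls; split => h.
  by have := NA h nxy; rewrite addrA subrK.
by have := NA h (NN nxy); rewrite opprB addrA subrK.
Qed.

Definition q_zero : quotT := qpi 0.
Definition q_opp (u : quotT) : quotT := qpi (- qrep u).
Definition q_add (u v : quotT) : quotT := qpi (qrep u + qrep v).
Definition q_scale a (u : quotT) : quotT := qpi (a *: qrep u).

Lemma rep_pi x : N (qrep (qpi x) - x).
Proof. by apply/qpi_eq; rewrite qpi_rep. Qed.

Lemma q_oppE x : q_opp (qpi x) = qpi (- x).
Proof. by apply/qpi_eq; rewrite -opprD; apply: NN; exact: rep_pi. Qed.
Lemma q_addE x y : q_add (qpi x) (qpi y) = qpi (x + y).
Proof.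
apply/qpi_eq; rewrite opprD addrACA; apply: NA; exact: rep_pi.
Qed.
Lemma q_scaleE a x : q_scale a (qpi x) = qpi (a *: x).
Proof. by apply/qpi_eq; rewrite -scalerBr; apply: NZ; exact: rep_pi. Qed.

Lemma q_addA : associative q_add.
Proof.
move=> x y z; rewrite -(qpi_rep x) -(qpi_rep y) -(qpi_rep z).
by rewrite !q_addE addrA.
Qed.
Lemma q_addC : commutative q_add.
Proof. by move=> x y; rewrite -(qpi_rep x) -(qpi_rep y) !q_addE addrC. Qed.
Lemma q_add0 : left_id q_zero q_add.
Proof. by move=> x; rewrite -(qpi_rep x) /q_zero q_addE add0r. Qed.
Lemma q_addN : left_inverse q_zero q_opp q_add.
Proof. by move=> x; rewrite -(qpi_rep x) q_oppE q_addE addNr. Qed.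
HB.instance Definition _ := GRing.isZmodule.Build quotT q_addA q_addC q_add0 q_addN.
Lemma q_scaleA a b v : q_scale a (q_scale b v) = q_scale (a * b) v.
Proof. by rewrite -(qpi_rep v) !q_scaleE scalerA. Qed.
Lemma q_scale1 : left_id 1 q_scale.
Proof. by move=> x; rewrite -(qpi_rep x) q_scaleE scale1r. Qed.
Lemma q_scaleDr : right_distributive q_scale +%R.
Proof.
move=> a x y; rewrite -(qpi_rep x) -(qpi_rep y).
have E : forall u v : quotT, u + v = q_add u v by [].
by rewrite !E (q_addE (qrep x)) !q_scaleE q_addE scalerDr.
Qed.
Lemma q_scaleDl v : {morph q_scale^~ v : a b / a + b}.
Proof.
move=> a b; rewrite -(qpi_rep v).
have E : forall u v : quotT, u + v = q_add u v by [].
by rewrite E !q_scaleE q_addE scalerDl.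
Qed.
HB.instance Definition _ :=
  GRing.Zmodule_isLmodule.Build S quotT q_scaleA q_scale1 q_scaleDr q_scaleDl.

Lemma qpi_lin : linear qpi.
Proof.
move=> a x y.
have E : forall u v : quotT, u + v = q_add u v by [].
have F : forall b (u : quotT), b *: u = q_scale b u by [].
by rewrite E F q_scaleE q_addE.
Qed.
Definition qproj : {linear M -> quotT} := mkLin qpi_lin.
Lemma qproj0 x : qproj x = 0 <-> N x.
Proof. rewrite /= -[0]/(qpi 0) qpi_eq subr0; by []. Qed.
Lemma qproj_surj (u : quotT) : exists m, qproj m = u.
Proof. by exists (qrep u); exact: qpi_rep. Qed.

Section Fact.
Variables (B : lmodType S) (g : {linear M -> B}) (Hg : forall x, N x -> g x = 0).
Definition q_fact_fun (u : quotT) : B := g (qrep u).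
Lemma q_fact_E x : q_fact_fun (qproj x) = g x.
Proof.
rewrite /q_fact_fun /=; apply/eqP; rewrite -subr_eq0 -linearB; apply/eqP.
exact/Hg/rep_pi.
Qed.
Lemma q_fact_lin : linear q_fact_fun.
Proof.
move=> a u v; have [x <-] := qproj_surj u; have [y <-] := qproj_surj v.
by rewrite -linearP !q_fact_E linearP.
Qed.
Definition q_fact : {linear quotT -> B} := mkLin q_fact_lin.
Lemma q_factE x : q_fact (qproj x) = g x.
Proof. exact: q_fact_E. Qed.
End Fact.
End Quot.
Section Main.
Variable R : nzRingType.
Local Notation Mod := (lmodType R^c).

Lemma comp_lin (A B C : Mod) (g : {linear B -> C}) (f : {linear A -> B}) :
  linear (fun x => g (f x)).
Proof. by move=> a x y; rewrite !linearP. Qed.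
Definition lcomp (A B C : Mod) (g : {linear B -> C}) (f : {linear A -> B}) : {linear A -> C} := mkLin (@comp_lin A B C g f).

Lemma inj_ker (A B : Mod) (f : {linear A -> B}) :
  (forall x, f x = 0 -> x = 0) -> injective f.
Proof. by move=> H x y e; apply/eqP; rewrite -subr_eq0; apply/eqP/H; rewrite linearB e subrr. Qed.

Lemma inj_ker0 (A B : Mod) (f : {linear A -> B}) x : injective f -> f x = 0 -> x = 0.
Proof. by move=> fi e; apply: fi; rewrite e linear0. Qed.

Lemma proj_lin (I : Type) (T : Mod) (i : I) : linear (fun y : power I T => y i).
Proof. by []. Qed.
Definition lproj (I : Type) (T : Mod) (i : I) : {linear power I T -> T} := mkLin (@proj_lin I T i).

Lemma power0 (I : Type) (T : Mod) (y : power I T) : (forall i, y i = 0) -> y = 0.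
Proof. by move=> H; apply: functional_extensionality_dep => i; rewrite H. Qed.

Lemma cogen_perp (T X Y : Mod) : Cogen T Y -> perpL T X -> hom_zero X Y.
Proof.
move=> [I [e ei]] hX f x; apply: (inj_ker0 ei); apply: power0 => i.
exact (hX (lcomp (@lproj I T i) (lcomp e f)) x).
Qed.

Lemma diag_lin (T : Mod) : linear (fun t : T => (fun _ : unit => t) : power unit T).
Proof. by []. Qed.

Lemma cogen_self (T : Mod) : Cogen T T.
Proof.
exists unit, (mkLin (@diag_lin T)) => x y /= e.
exact: (f_equal (fun F : power unit T => F tt) e).
Qed.

Lemma id_lin (A : Mod) : linear (fun x : A => x).
Proof. by []. Qed.

Lemma cogen_power (I : Type) (T : Mod) : Cogen T (power I T).
Proof. by exists I, (mkLin (@id_lin (power I T))). Qed.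

Lemma B_sub (Q0 Q1 : Mod) (zeta : {linear Q0 -> Q1}) (HQ1 : injective_module Q1)
  (X Y : Mod) (e : {linear X -> Y}) : injective e -> B_class zeta Y -> B_class zeta X.
Proof.
move=> ei BY g; have [g' Hg'] := HQ1 _ _ e g ei.
have [h Hh] := BY g'; exists (lcomp h e) => x /=.
by rewrite Hh Hg'.
Qed.

Lemma cogen_B (T Q0 Q1 : Mod) (zeta : {linear Q0 -> Q1}) (HQ1 : injective_module Q1) :
  B_class zeta T -> closed_under_products (B_class zeta) ->
  forall X, Cogen T X -> B_class zeta X.
Proof.
move=> BT Bp X [I [e ei]]; apply: (B_sub HQ1 ei).
exact: (Bp I (fun _ => T)).
Qed.

Lemma exact_zeta (T Q0 Q1 : Mod) (iota : {linear T -> Q0}) (zeta : {linear Q0 -> Q1}) :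
  exact_copres iota zeta -> forall t, zeta (iota t) = 0.
Proof. by move=> [_ H] t; apply/H; exists t. Qed.

Lemma rej (T Q0 Q1 : Mod) (iota : {linear T -> Q0}) (zeta : {linear Q0 -> Q1})
  (HQ0 : injective_module Q0) (Hex : exact_copres iota zeta)
  (HC : forall X, Cogen T X -> B_class zeta X) (Y : Mod)
  (HY : forall X, perpL T X -> hom_zero X Y) : Cogen T Y.
Proof.
have [ii Hker] := Hex.
pose I := {linear Y -> T}.
have phil : linear (fun y : Y => (fun u : I => u y) : power I T).
  by move=> a x y; apply: functional_extensionality_dep => u; rewrite linearP.
pose phi := mkLin phil.
pose K := fun y : Y => forall u : I, u y = 0.
have K0 : K 0 by move=> u; rewrite linear0.
have KD : forall a x y, K x -> K y -> K (a *: x + y).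
  by move=> a x y kx ky u; rewrite linearP kx ky scaler0 addr0.
pose kap := s_incl K0 KD.
have kapi : injective kap by apply: s_incl_inj.
have kapK : forall k, K (kap k) by move=> k; apply: s_incl_P.
have Kphi : forall y, phi y = 0 <-> K y.
  move=> y; split => [e u|ky]; last by apply: power0 => u; exact: ky.
  by have := f_equal (fun F : power I T => F u) e.
pose C : Mod := quotT K0 KD.
pose pi : {linear Y -> C} := qproj K0 KD.
have pi0 : forall y, pi y = 0 <-> K y by move=> y; apply: qproj0.
have pisurj : forall c : C, exists y, pi y = c by move=> c; apply: qproj_surj.
have phiK : forall y, K y -> phi y = 0 by move=> y /Kphi.
pose phib : {linear C -> power I T} := q_fact K0 KD (g := phi) phiK.
have phibE : forall y, phib (pi y) = phi y by move=> y; apply: q_factE.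
have phibi : injective phib.
  apply: inj_ker => c; have [y <-] := pisurj c; rewrite phibE => /Kphi.
  by move/pi0.
have BC : B_class zeta C by apply: HC; exists I, phib.
have KT : perpL T (subT K0 KD).
  move=> f k.
  have [g Hg] := HQ0 _ _ kap (lcomp iota f) kapi.
  have zgK : forall y, K y -> zeta (g y) = 0.
    move=> y ky; have -> : y = kap (exist _ y ky) by [].
    by rewrite Hg /= exact_zeta.
  pose zg := lcomp zeta g.
  pose u : {linear C -> Q1} := q_fact K0 KD (g := zg) zgK.
  have uE : forall y, u (pi y) = zeta (g y) by move=> y; apply: q_factE.
  have [v Hv] := BC u.
  have ex : forall y, exists t, iota t = g y - v (pi y).
    by move=> y; apply/Hker; rewrite linearB /= Hv uE subrr.
  pose w := fun y => proj1_sig (constructive_indefinite_description _ (ex y)).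
  have wE : forall y, iota (w y) = g y - v (pi y).
    by move=> y; rewrite /w; case: constructive_indefinite_description.
  have wl : linear w.
    move=> a x y; apply: ii; rewrite linearP !wE !linearP /=.
    by rewrite scalerBr scalerN addrACA.
  have := kapK k (mkLin wl); rewrite /= => w0.
  have := wE (kap k); rewrite w0 linear0.
  have -> : pi (kap k) = 0 by apply/pi0/kapK.
  rewrite linear0 subr0 Hg /= => e.
  by apply: ii; rewrite linear0.
exists I, phi; apply: inj_ker => y /Kphi ky.
exact: (HY _ KT kap (exist _ y ky)).
Qed.

Lemma cogen_copres (T Q0 Q1 : Mod) (zeta : {linear Q0 -> Q1})
  (Hc : cosilting_wrt T zeta) (X : Mod) : Cogen T X -> Copres T X.
Proof.
case: Hc => [[HQ0 HQ1 [iota [ii Hker]]] HCB] [I0 [e ei]].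
pose I := {linear X -> T}.
have fl : linear (fun x : X => (fun u : I => u x) : power I T).
  by move=> a x y; apply: functional_extensionality_dep => u; rewrite linearP.
pose f := mkLin fl.
have fi : injective f.
  apply: inj_ker => x fx; apply: (inj_ker0 ei); apply: power0 => i0.
  exact (f_equal (fun F : power I T => F (lcomp (@lproj I0 T i0) e)) fx).
pose N := fun y : power I T => exists x, f x = y.
have N0 : N 0 by exists 0; rewrite linear0.
have ND : forall a x y, N x -> N y -> N (a *: x + y).
  by move=> a x y [x1 <-] [y1 <-]; exists (a *: x1 + y1); rewrite linearP.
pose C : Mod := quotT N0 ND.
pose pi : {linear power I T -> C} := qproj N0 ND.
have pi0 : forall y, pi y = 0 <-> N y by move=> y; apply: qproj0.
have pisurj : forall c : C, exists y, pi y = c by move=> c; apply: qproj_surj.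
have BC : B_class zeta C.
  move=> g.
  have [h Hh] := (proj1 (HCB (power I T)) (cogen_power I T)) (lcomp g pi).
  have ex : forall x, exists t, iota t = h (f x).
    move=> x; apply/Hker; rewrite Hh /=.
    have e0 : pi (f x) = 0 by apply/pi0; exists x.
    have := congr1 g e0; rewrite linear0 => e1; exact e1.
  pose k := fun x => proj1_sig (constructive_indefinite_description _ (ex x)).
  have kE : forall x, iota (k x) = h (f x).
    by move=> x; rewrite /k; case: constructive_indefinite_description.
  have kl : linear k by move=> a x y; apply: ii; rewrite linearP !kE !linearP.
  pose kk : I := mkLin kl.
  have h'l : linear (fun y : power I T => h y - iota (y kk)).
    move=> a x y; rewrite !linearP /=.
    by rewrite scalerBr scalerN addrACA.
  pose h' := mkLin h'l.
  have h'K : forall y, N y -> h' y = 0.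
    by move=> y [x <-]; rewrite /= -kE subrr.
  pose hb : {linear C -> Q0} := q_fact N0 ND (g := h') h'K.
  have hbE : forall y, hb (pi y) = h' y by move=> y; apply: q_factE.
  exists hb => c; have [y <-] := pisurj c.
  by rewrite hbE /= linearB /= Hh (exact_zeta (conj ii Hker)) subr0.
have [J [e' e'i]] := proj2 (HCB C) BC.
exists I, J, (lcomp e' pi), f; split => // y; split.
  by move=> /= h; apply/pi0; apply: (inj_ker0 e'i).
by move=> /pi0 /= ->; rewrite linear0.
Qed.
End Main.

Unset Implicit Arguments. Set Strict Implicit.
Theorem corollary3p5 (R : nzRingType) (Q0 Q1 : lmodType R^c)
    (zeta : {linear Q0 -> Q1})
    (HQ0 : injective_module Q0) (HQ1 : injective_module Q1)
    (T : lmodType R^c) (iota : {linear T -> Q0})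
    (Hker : exact_copres iota zeta) :
  (partial_cosilting T -> torsion_pair (perpL T) (Cogen T)) /\
  (cosilting_wrt T zeta <-> torsion_pair (perpL T) (B_class zeta)) /\
  (cosilting T -> forall X : lmodType R^c, Cogen T X <-> Copres T X).
Proof.
split; [|split].
- move=> [P0 [P1 [z [[HP0 HP1 [io Hio]] BT Bp]]]].
  have HC := cogen_B HP1 BT Bp.
  split=> X; split.
  + by move=> hX Y CY; exact: (cogen_perp CY hX).
  + by move=> H; apply: H; exact: cogen_self.
  + by move=> CX Y hY; exact: (cogen_perp CX hY).
  + by move=> H; exact: (rej HP0 Hio HC).
- split.
  + move=> [_ HCB]; split=> X; split.
    * by move=> hX Y /HCB CY; exact: (cogen_perp CY hX).
    * by move=> H; apply: H; apply/HCB; exact: cogen_self.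
    * by move=> /HCB CX Y hY; exact: (cogen_perp CX hY).
    * move=> H; apply/HCB.
      by apply: (rej HQ0 Hker) => // Y /HCB.
  + move=> [H1 H2].
    have HC : forall X, Cogen T X -> B_class zeta X.
      by move=> X CX; apply/H2 => Y hY; exact: (cogen_perp CX hY).
    split; first by split=> //; exists iota.
    move=> X; split; first exact: HC.
    by move=> /H2 BX; apply: (rej HQ0 Hker HC).
- move=> [P0 [P1 [z Hc]]] X; split; first exact: (cogen_copres Hc).
  by move=> [I [J [g [f [fi _]]]]]; exists I, f.
Qed.
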